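(* Let $m\ge 1$ and for $i\in\{1,\dots,m\}$ let $f_i:\mathbb{R}^n\to\mathbb{R}\cup\{\infty\}$ be proper, lower semicontinuous, prox-bounded functions with respective thresholds of prox-boundedness $\bar r_i$. Let $r>\max_i\{\bar r_i\}$. Let $\delta:\Lambda\to\mathbb{R}$ be a continuous function with $\delta(e_i)=0$ for each canonical unit vector $e_i$ and $\delta(\lambda)>0$ for all other $\lambda\in\Lambda$, and define $$PA_r(x,\lambda):=-e_{r+\delta(\lambda)}\Big(-\sum_{i=1}^m\lambda_i e_rf_i\Big)(x).$$ Then for every $\lambda\in\Lambda$, $PA_r(\cdot,\lambda)$ is a proper function of $x$. Furthermore, if $\lambda\in\Lambda$ satisfies $\lambda_i\neq 1$ for all $i$, then $PA_r(\cdot,\lambda)$ is a lower-$\mathcal{C}^2$ function of $x$. Finally, if for some $i$ the function $f_i+\frac{r}{2}q$ is convex, then $PA_r(\cdot,e_i)=f_i$.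
   Context: $q(x)=|x|^2$. $\Lambda=\{\lambda\in\mathbb{R}^m:\lambda_i\ge 0\ \forall i,\ \sum_i\lambda_i=1\}$, and $e_i$ is the canonical unit vector with $i$-th component $1$. The Moreau envelope of $f$ with prox-parameter $r$ is $e_rf(x)=\inf_y\{f(y)+\frac r2|y-x|^2\}$. A proper function $f$ is prox-bounded if there exist $r>0$ and $\bar x$ with $e_rf(\bar x)>-\infty$; the infimum of all such $r$ is the threshold of prox-boundedness. A function is lower-$\mathcal{C}^2$ (on $\mathbb{R}^n$) if it is finite-valued and at every point $x$ the function plus some quadratic term is convex on an open convex neighborhood of $x$. *)

(* Defs.v *)
(* R^n is modelled as 'rV[R]_n,
   with its canonical (product = Euclidean) topology from MathComp-Analysis;
   extended-real valued functions take values in \bar R. *)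
From HB Require Import structures.
From mathcomp Require Import all_boot all_order all_algebra.
From mathcomp Require Import all_classical all_reals all_analysis.
Set Implicit Arguments. Unset Strict Implicit. Unset Printing Implicit Defensive.
Import Order.TTheory GRing.Theory Num.Theory.
Import numFieldNormedType.Exports.
Local Open Scope classical_set_scope.
Local Open Scope ring_scope.

Section defs.
Variables (R : realType).

Definition sqnorm (n : nat) (x : 'rV[R]_n) : R := \sum_(i < n) (x 0 i) ^+ 2.

Definition proper_fun (n : nat) (f : 'rV[R]_n -> \bar R) : Prop :=
  (forall x, (-oo < f x)%E) /\ (exists x, (f x < +oo)%E).

Definition moreau_env (n : nat) (f : 'rV[R]_n -> \bar R) (r : R)
  (x : 'rV[R]_n) : \bar R :=
  ereal_inf [set (f y + (r / 2 * sqnorm (y - x))%:E)%E | y in [set: 'rV[R]_n]].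

Definition prox_bounded (n : nat) (f : 'rV[R]_n -> \bar R) : Prop :=
  exists r : R, 0 < r /\ exists xb, (-oo < moreau_env f r xb)%E.

Definition prox_threshold (n : nat) (f : 'rV[R]_n -> \bar R) : \bar R :=
  ereal_inf [set r%:E | r in [set r : R | 0 < r /\
                                exists xb, (-oo < moreau_env f r xb)%E]].

Definition simplex (m : nat) : set 'rV[R]_m :=
  [set l | (forall i, 0 <= l 0 i) /\ \sum_(i < m) l 0 i = 1].

Definition unitv (m : nat) (i : 'I_m) : 'rV[R]_m := delta_mx 0 i.

Definition convex_efun (n : nat) (g : 'rV[R]_n -> \bar R) : Prop :=
  forall (x y : 'rV[R]_n) (t : R), 0 <= t <= 1 ->
    (g (t *: x + (1 - t) *: y)%R <= t%:E * g x + (1 - t)%:E * g y)%E.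

Definition convex_set_Rn (n : nat) (U : set 'rV[R]_n) : Prop :=
  forall x y (t : R), U x -> U y -> 0 <= t <= 1 -> U (t *: x + (1 - t) *: y).

Definition convex_on (n : nat) (U : set 'rV[R]_n) (g : 'rV[R]_n -> R) : Prop :=
  forall x y (t : R), U x -> U y -> 0 <= t <= 1 ->
    g (t *: x + (1 - t) *: y) <= t * g x + (1 - t) * g y.

Definition lower_C2 (n : nat) (f : 'rV[R]_n -> \bar R) : Prop :=
  (forall x, f x \is a fin_num) /\
  forall x, exists (U : set 'rV[R]_n) (rho : R),
    [/\ open U, U x, convex_set_Rn U &
        convex_on U (fun y => fine (f y) + rho / 2 * sqnorm y)].

Definition PA (n m : nat) (f : 'I_m -> 'rV[R]_n -> \bar R)
  (delta : 'rV[R]_m -> R) (r : R) (l : 'rV[R]_m) (x : 'rV[R]_n) : \bar R :=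
  (- moreau_env (fun y => - \sum_(i < m) (l 0 i)%:E * moreau_env (f i) r y)
                (r + delta l) x)%E.

End defs.

(* Main.v *)
Require Import Defs.
From HB Require Import structures.
From mathcomp Require Import all_boot all_order all_algebra.
From mathcomp Require Import all_classical all_reals all_analysis.
From mathcomp Require Import ring lra.
Set Implicit Arguments. Unset Strict Implicit. Unset Printing Implicit Defensive.
Import Order.TTheory GRing.Theory Num.Theory.
Import numFieldNormedType.Exports.
Local Open Scope classical_set_scope.
Local Open Scope ring_scope.
Section S.
Variable R : realType.

Implicit Types (n : nat).
Lemma QL (a b t u v : R) : 0 < a < b -> a * (t-u)^+2 - b*(t-v)^+2 <= a*b/(b-a) * (u-v)^+2.
Proof.
move=> /andP[a0 ab].
have hba : 0 < b - a by rewrite subr_gt0.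
rewrite mulrAC ler_pdivlMr // -subr_ge0.
have -> : a * b * (u - v) ^+ 2 - (a * (t - u) ^+ 2 - b * (t - v) ^+ 2) * (b - a) = ((b-a)*t + a*u - b*v)^+2 by ring.
exact: sqr_ge0.
Qed.

Definition ip n (a b : 'rV[R]_n) := \sum_(i < n) a 0 i * b 0 i.

Lemma sqnorm_ge0 n (x : 'rV[R]_n) : 0 <= sqnorm x.
Proof. by apply: sumr_ge0 => i _; exact: sqr_ge0. Qed.

Lemma sqnorm_coord n (x : 'rV[R]_n) i : (x 0 i)^+2 <= sqnorm x.
Proof.
rewrite /sqnorm (bigD1 i) //= lerDl; apply: sumr_ge0 => j _; exact: sqr_ge0.
Qed.

Lemma sqnormB_sym n (x y : 'rV[R]_n) : sqnorm (x - y) = sqnorm (y - x).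
Proof. by apply: eq_bigr => i _; rewrite !mxE; ring. Qed.

Lemma sqnorm0 n : sqnorm (0 : 'rV[R]_n) = 0.
Proof. by rewrite /sqnorm big1 // => i _; rewrite mxE expr0n. Qed.

Lemma out_ball n (x z : 'rV[R]_n) e : 0 < e -> ~ ball x e z -> e^+2 <= sqnorm (z - x).
Proof.
move=> e0 nb; rewrite leNgt; apply/negP => hlt; apply: nb.
split => // i j; rewrite /ball /= ltr_norml.
have := sqnorm_coord (z - x) j; rewrite !mxE (ord1 i) => hj.
have h : (z 0 j - x 0 j)^+2 < e^+2 by apply: le_lt_trans hlt.
by apply/andP; split; nra.
Qed.

Lemma QLv n (a b : R) (y u v : 'rV[R]_n) : 0 < a < b ->
  a * sqnorm (y - u) - b * sqnorm (y - v) <= a*b/(b-a) * sqnorm (u - v).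
Proof.
move=> hab; rewrite /sqnorm !mulr_sumr -sumrN -big_split /=.
apply: ler_sum => i _; rewrite !mxE; exact: QL.
Qed.

Lemma sq_cont n (a : 'rV[R]_n) : continuous (fun z : 'rV[R]_n => sqnorm (z - a)).
Proof.
move=> z.
have -> : (fun z : 'rV[R]_n => sqnorm (z - a)) = \sum_(i < n) (fun z : 'rV[R]_n => (z 0 i - a 0 i) * (z 0 i - a 0 i)).
  rewrite fct_sumE; apply: funext => w; rewrite /sqnorm; apply: eq_bigr => i _; by rewrite !mxE expr2.
apply: (big_ind (fun g : 'rV[R]_n -> R => {for z, continuous g})).
- exact: cst_continuous.
- by move=> g1 g2 h1 h2; apply: continuousD.
- move=> i _.
  have hc : {for z, continuous (fun w : 'rV[R]_n => w 0 i - a 0 i)}.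
    apply: continuousD; first exact: coord_continuous.
    exact: cst_continuous.
  exact: continuousM.
Qed.

Lemma lscD n (f : 'rV[R]_n -> \bar R) (c : 'rV[R]_n -> R) :
  lower_semicontinuous f -> continuous c ->
  lower_semicontinuous (fun z => (f z + (c z)%:E)%E).
Proof.
move=> hf hc x a hax.
have [b [hb1 hb2]] : exists b : R, a - c x < b /\ (b%:E < f x)%E.
  move: hax; case: (f x) => [t| |] /= hax.
  - exists ((a - c x + t)/2); rewrite lte_fin; move: hax; rewrite -EFinD lte_fin => hax.
    split; lra.
  - by exists (a - c x + 1); split; [lra | exact: ltry].
  - by move: hax; rewrite /= ltNge leNye.
have [V hV hVb] := hf x b hb2.
have hc' : \forall y \near x, c x - (b - (a - c x)) < c y.
  apply: (@cvgr_gt _ _ _ _ c (c x) (hc x)); lra.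
exists (V `&` [set y | c x - (b - (a - c x)) < c y]).
  exact: filterI hV hc'.
move=> y [/hVb hy /= hcy].
move: hy; case: (f y) => [t| |] //= hy.
- by rewrite -EFinD lte_fin; move: hy; rewrite lte_fin => hy; lra.
- by rewrite /= ltry.
Qed.
Lemma le_by_reals (a b : \bar R) : (forall c : R, (c%:E < a)%E -> (c%:E <= b)%E) -> (a <= b)%E.
Proof.
case: a => [t| |] h; last by rewrite leNye.
- case: b h => [s| |] h; last 2 first.
  + by rewrite leey.
  + by have := h (t - 1); rewrite lte_fin leeNy_eq => /(_ ltac:(lra)).
  rewrite lee_fin leNgt; apply/negP => hst.
  by have := h ((s + t)/2); rewrite !lte_fin lee_fin => /(_ ltac:(lra)); lra.
- case: b h => [s| |] h; last 2 first.
  + by rewrite leey.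
  + by have := h 0; rewrite ltry leeNy_eq => /(_ isT).
  by have := h (s + 1); rewrite ltry lee_fin => /(_ isT) hh; exfalso; lra.
Qed.

Lemma me_le n (f : 'rV[R]_n -> \bar R) r x z :
  (moreau_env f r x <= f z + (r / 2 * sqnorm (z - x))%:E)%E.
Proof. by apply: ereal_inf_lbound; exists z. Qed.

Lemma thr_lb n (f : 'rV[R]_n -> \bar R) r : (prox_threshold f < r%:E)%E ->
  exists r' c xb, 0 < r' < r /\ forall y, ((c - r' / 2 * sqnorm (y - xb))%:E <= f y)%E.
Proof.
move=> /ereal_inf_lt [e [r' [r'0 [xb hxb]] <-]]; rewrite lte_fin => hr'.
have [c hc] : exists c, (c%:E <= moreau_env f r' xb)%E.
  by move: hxb; case: (moreau_env f r' xb) => [c|_|//]; [exists c | exists 0; rewrite leey].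
exists r', c, xb; split; first by rewrite r'0 hr'.
move=> y; rewrite EFinB leeBlDr //.
exact: le_trans hc (me_le _ _ _ _).
Qed.

Lemma me_lb n (f : 'rV[R]_n -> \bar R) r r' c xb : 0 < r' < r ->
  (forall y, ((c - r' / 2 * sqnorm (y - xb))%:E <= f y)%E) ->
  forall x y, ((c - (r' * r / (r - r')) / 2 * sqnorm (xb - x))%:E <= f y + (r / 2 * sqnorm (y - x))%:E)%E.
Proof.
move=> hr hf x y.
apply: le_trans (leeD (hf y) (lexx _)); rewrite -EFinD lee_fin.
have := QLv y xb x hr; lra.
Qed.
Lemma exists_min n (h : 'rV[R]_n -> \bar R) (x : 'rV[R]_n) (L mu : R) z0 :
  lower_semicontinuous h -> 0 < mu ->
  (forall z, ((L + mu * sqnorm (z - x))%:E <= h z)%E) -> (h z0 < +oo)%E ->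
  exists p, forall z, (h p <= h z)%E.
Proof.
move=> hl mu0 hb hz0.
set m0 := ereal_inf (range h).
have m0fin : m0 \is a fin_num.
  apply: fin_real; apply/andP; split.
  - apply: lt_le_trans (ltNyr L) _; apply: le_ereal_inf_tmp => _ [z _ <-].
    apply: le_trans (hb z); rewrite lee_fin; have := sqnorm_ge0 (z - x); nra.
  - by apply: le_lt_trans hz0; apply: ereal_inf_lbound; exists z0.
set M := fine m0.
have hM : m0 = M%:E by rewrite fineK.
set A := [set z | (h z <= (M+1)%:E)%E].
have Acl : closed A.
  have -> : A = ~` [set z | ((M+1)%:E < h z)%E].
    by rewrite predeqE => z; rewrite /A /setC /= leNgt; split => /negP.
  by apply: open_closedC; move/lower_semicontinuousP: hl; apply.
set K := (M + 1 - L) / mu.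
have Abox : A `<=` [set v : 'rV[R]_n | forall i, `[x 0 i - (1 + K), x 0 i + (1 + K)]%classic (v 0 i)].
  move=> z Az i.
  have hsq : sqnorm (z - x) <= K.
    rewrite /K ler_pdivlMr // mulrC; have := le_trans (hb z) Az; rewrite lee_fin; lra.
  have := le_trans (sqnorm_coord (z - x) i) hsq; rewrite !mxE => hc.
  have ht : forall t : R, t^+2 <= K -> -(1+K) <= t /\ t <= 1+K by move=> t ht; split; nra.
  have [ht1 ht2] := ht _ hc.
  rewrite /= in_itv /=; apply/andP; split; lra.
have Bc : compact [set v : 'rV[R]_n | forall i, `[x 0 i - (1 + K), x 0 i + (1 + K)]%classic (v 0 i)] :=
  @rV_compact _ n (fun i => `[x 0 i - (1 + K), x 0 i + (1 + K)]%classic) (fun i => @segment_compact _ _ _).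
have Ac : compact A := subclosed_compact Acl Bc Abox.
have /choice [zs hzs] : forall k : nat, exists z, (h z < (M + k.+1%:R^-1)%:E)%E.
  move=> k; have : (m0 < (M + k.+1%:R^-1)%:E)%E by rewrite hM lte_fin ltrDl invr_gt0 ltr0n.
  by move/ereal_inf_lt => [_ [z _ <-] hz]; exists z.
have zsA : forall k, A (zs k).
  move=> k; rewrite /A /=; apply: ltW; apply: lt_le_trans (hzs k) _.
  by rewrite lee_fin lerD2l invf_le1 // ?ler1n ?ltr0n.
have hF : (zs @ \oo) A by rewrite /fmap /=; exists 0%N => // k _; exact: zsA.
have [p [Ap clp]] := Ac _ _ hF.
exists p => z.
have hz : (m0 <= h z)%E by apply: ereal_inf_lbound; exists z.
apply: le_trans hz.
rewrite hM leNgt; apply/negP => hlt.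
have [a [ha1 ha2]] : exists a, M < a /\ (a%:E < h p)%E.
  move: hlt; case: (h p) => [t| |] //= hlt.
  - exists ((M + t)/2); rewrite lte_fin; move: hlt; rewrite lte_fin => hlt; split; lra.
  - by exists (M + 1); split; [lra | exact: ltry].
have [V hV hVa] := hl p a ha2.
set k0 := Num.Def.trunc ((a - M)^-1).
have hk0 : k0.+1%:R^-1 < a - M.
  rewrite -[a - M]invrK ltf_pV2 ?posrE ?ltr0n ?invr_gt0 ?subr_gt0 //.
  exact: truncnS_gt.
have hS : (zs @ \oo) [set zs k | k in [set k | (k0 <= k)%N]].
  by rewrite /fmap /=; exists k0 => // k /= hk; exists k.
have := clp _ _ hS hV.
  case => _ [[k hk <-] hVk].
  have := hVa _ hVk; have := hzs k => h1 h2.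
  have : (a%:E < (M + k.+1%:R^-1)%:E)%E := lt_trans h2 h1.
  rewrite lte_fin => h3.
  have h4 : k.+1%:R^-1 <= k0.+1%:R^-1 :> R.
    by rewrite lef_pV2 ?posrE ?ltr0n // ler_nat.
  have h6 : M + k.+1%:R^-1 <= M + k0.+1%:R^-1 by rewrite lerD2l.
  have := lt_le_trans h3 h6.
  rewrite -ltrBlDl => h5.
  by have := lt_trans h5 hk0; rewrite ltxx.
Qed.
Lemma R1 n (t : R) (z p x : 'rV[R]_n) :
  sqnorm ((t *: z + (1 - t) *: p) - x) = sqnorm (p - x) + 2 * t * ip (p - x) (z - p) + t^+2 * sqnorm (z - p).
Proof.
rewrite /sqnorm /ip !mulr_sumr -!big_split /=; apply: eq_bigr => i _; rewrite !mxE; ring.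
Qed.

Lemma R2 n (z p x : 'rV[R]_n) : ip (x - p) (z - p) = ip (x - p) (z - x) + sqnorm (x - p).
Proof.
rewrite /sqnorm /ip -!big_split /=; apply: eq_bigr => i _; rewrite !mxE; ring.
Qed.

Lemma R3 n (r : R) (z y x : 'rV[R]_n) :
  r / 2 * sqnorm (z - y) - r / 2 * sqnorm (y - x) = r / 2 * sqnorm z - r / 2 * sqnorm x - r * ip y (z - x).
Proof.
rewrite /sqnorm /ip !mulr_sumr -!sumrN -!big_split /=; apply: eq_bigr => i _; rewrite !mxE; field; rewrite ?pnatr_eq0 // .
Qed.

Lemma ipZ n (c : R) (a b : 'rV[R]_n) : ip (c *: a) b = c * ip a b.
Proof. rewrite /ip mulr_sumr; apply: eq_bigr => i _; rewrite !mxE; ring. Qed.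

Lemma ipN n (a b c : 'rV[R]_n) : ip (a - b) c = - ip (b - a) c.
Proof. rewrite /ip -sumrN; apply: eq_bigr => i _; rewrite !mxE; ring. Qed.

Lemma lim0 (a b c : R) : 0 <= c -> (forall t, 0 < t <= 1 -> a <= b + t * c) -> a <= b.
Proof.
move=> c0 h; rewrite leNgt; apply/negP => hba.
have hd : 0 < a - b by rewrite subr_gt0.
have hd' : 0 < a - b + c by lra.
have := h ((a - b) / (a - b + c)).
rewrite divr_gt0 //= ler_pdivrMr // mul1r.
have -> : (a - b) / (a - b + c) * c = (a - b) * (c / (a - b + c)) by rewrite mulrAC mulrA.
move=> /(_ ltac:(lra)) h2.
have : c / (a - b + c) < 1 by rewrite ltr_pdivrMr // mul1r; lra.
move=> h3.
have : (a - b) * (c / (a - b + c)) < a - b by rewrite -[X in _ < X]mulr1 ltr_pM2l.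
lra.
Qed.

Lemma cont_q n (k : R) (a : 'rV[R]_n) : continuous (fun z : 'rV[R]_n => k * sqnorm (z - a)).
Proof. move=> z; apply: (@continuousM _ _ (fun _ => k) (fun z : 'rV[R]_n => sqnorm (z - a))); [exact: cst_continuous | exact: sq_cont]. Qed.
Lemma ereal_cases (v : \bar R) : (-oo < v)%E -> v = +oo%E \/ exists t, v = t%:E.
Proof. by case: v => [t _| _|//]; [right; exists t | left]. Qed.

Lemma cont_q0 n (k : R) : continuous (fun z : 'rV[R]_n => k * sqnorm z).
Proof.
have -> : (fun z : 'rV[R]_n => k * sqnorm z) = (fun z => k * sqnorm (z - 0)).
  by apply: funext => z; rewrite subr0.
exact: cont_q.
Qed.

Lemma core n (f : 'rV[R]_n -> \bar R) (r L : R) z0 x (al : R) :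
  0 < r -> lower_semicontinuous f -> (forall z, (-oo < f z)%E) ->
  convex_efun (fun x => (f x + (r / 2 * sqnorm x)%:E)%E) ->
  (forall z, (L%:E <= f z + (r / 2 * sqnorm z)%:E)%E) -> (f z0 < +oo)%E -> (al%:E < f x)%E ->
  exists y, forall z, ((al + r / 2 * sqnorm (y - x))%:E <= f z + (r / 2 * sqnorm (z - y))%:E)%E.
Proof.
move=> r0 hl hninf hconv hL hz0 hax.
set be := al + r / 2 * sqnorm x.
have gx : (be%:E < f x + (r / 2 * sqnorm x)%:E)%E.
  case: (ereal_cases (hninf x)) hax => [->|[t ->]] hax; first by rewrite addye // ltry.
  by rewrite -EFinD lte_fin /be; move: hax; rewrite lte_fin => hax; lra.
have lg : lower_semicontinuous (fun z => (f z + (r / 2 * sqnorm z)%:E)%E).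
  by apply: lscD => //; exact: cont_q0.
have [V hV hVb] := lg x be gx.
move/nbhs_ballP: hV => [e /= e0 hball].
set mu := 2 * (`|be - L| + 1) / e^+2.
have hn := normr_ge0 (be - L).
have e20 : 0 < e^+2 by exact: exprn_gt0.
have mu0 : 0 < mu by apply: divr_gt0 => //; lra.
have hC : forall z, (be%:E <= f z + (r / 2 * sqnorm z + mu / 2 * sqnorm (z - x))%:E)%E.
  move=> z; rewrite [in X in (_ <= X)%E]EFinD addeA.
  case: (pselect (ball x e z)) => hb.
  - apply: le_trans (leeDl _ _); first exact: ltW (hVb _ (hball _ hb)).
    by apply: mulr_ge0; [apply: divr_ge0; lra | exact: sqnorm_ge0].
  - have he := out_ball e0 hb.
    have hmu : `|be - L| + 1 <= mu / 2 * sqnorm (z - x).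
      have -> : mu / 2 * sqnorm (z - x) = (`|be - L| + 1) * (sqnorm (z - x) / e^+2).
        by rewrite /mu; field; rewrite gt_eqF.
      have : 1 <= sqnorm (z - x) / e^+2 by rewrite ler_pdivlMr // mul1r.
      nra.
    have := ler_norm (be - L).
    have := hL z.
    case: (ereal_cases (hninf z)) => [->|[t ->]]; first by move=> *; rewrite !addye // leey.
    rewrite -!EFinD !lee_fin => h1 h2; lra.
set h := fun z => (f z + (r / 2 * sqnorm z + mu / 2 * sqnorm (z - x))%:E)%E.
have lh : lower_semicontinuous h.
  apply: lscD => //; move=> z.
  apply: (@continuousD _ _ _ (fun z : 'rV[R]_n => r / 2 * sqnorm z) (fun z => mu / 2 * sqnorm (z - x))); [exact: cont_q0 | exact: cont_q].
have hbd : forall z, ((L + mu / 2 * sqnorm (z - x))%:E <= h z)%E.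
  move=> z; have -> : h z = (f z + (r / 2 * sqnorm z)%:E + (mu / 2 * sqnorm (z - x))%:E)%E.
    by rewrite /h EFinD addeA.
  by rewrite EFinD; apply: leeD (hL z) (lexx _).
have hz0' : (h z0 < +oo)%E.
  rewrite /h; case: (ereal_cases (hninf z0)) hz0 => [->|[t ->]] hz0; first by rewrite ltxx in hz0.
  by rewrite -EFinD ltry.
have mu20 : 0 < mu / 2 by apply: divr_gt0 => //; lra.
have [p hp] := exists_min lh mu20 hbd hz0'.
have [Fp hFp] : exists Fp, f p = Fp%:E.
  case: (ereal_cases (hninf p)) => [hpinf|//].
  by have := le_lt_trans (hp z0) hz0'; rewrite /h hpinf addye // ltxx.
have hbp : be <= Fp + r / 2 * sqnorm p + mu / 2 * sqnorm (p - x).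
  by have := hC p; rewrite hFp -EFinD lee_fin; lra.
have hopt : forall z t, f z = t%:E ->
    Fp + r / 2 * sqnorm p + mu * ip (x - p) (z - p) <= t + r / 2 * sqnorm z.
  move=> z Fz hfz.
  apply: (@lim0 _ _ (mu / 2 * sqnorm (z - p))).
    by apply: mulr_ge0; [lra | exact: sqnorm_ge0].
  move=> t /andP[t0 t1].
  have ht : 0 <= t <= 1 by rewrite t1 andbT ltW.
  have hcv := hconv z p t ht.
  have hm := hp (t *: z + (1 - t) *: p).
  rewrite /h hFp -EFinD in hm.
  rewrite hfz hFp -!EFinD in hcv.
  case: (ereal_cases (hninf (t *: z + (1 - t) *: p))) hcv hm => [->|[Fpt ->]] hcv hm.
    by move: hcv; rewrite addye // leNgt ltey.
  rewrite -EFinD lee_fin in hcv; rewrite -EFinD lee_fin R1 in hm.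
  rewrite ipN.
  set S1 := sqnorm (p - x) in hm *; set S2 := sqnorm (z - p) in hm *.
  set I1 := ip (p - x) (z - p) in hm *.
  set T := sqnorm (t *: z + (1 - t) *: p) in hm hcv.
  have key : t * (Fp + r / 2 * sqnorm p - mu * I1) <= t * (Fz + r / 2 * sqnorm z + t * (mu / 2 * S2)).
    nra.
  by move: key; rewrite ler_pM2l // mulrN => key; lra.
exists ((mu / r) *: (x - p)) => z.
case: (ereal_cases (hninf z)) => [->|[Fz hfz]]; first by rewrite !addye // leey.
rewrite hfz -EFinD lee_fin.
have h1 := hopt z Fz hfz.
have h2 := R2 z p x.
have h3 := R3 r z ((mu / r) *: (x - p)) x.
have h4 : r * ip ((mu / r) *: (x - p)) (z - x) = mu * ip (x - p) (z - x).
  by rewrite ipZ mulrA mulrCA divff ?gt_eqF // mulr1.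
have h5 := sqnorm_ge0 (p - x).
have h6 := sqnormB_sym x p.
have h2' : mu * ip (x - p) (z - p) = mu * ip (x - p) (z - x) + mu * sqnorm (x - p) by rewrite h2 mulrDr.
have h7 : mu / 2 * sqnorm (p - x) <= mu * sqnorm (x - p) by rewrite h6; nra.
move: hbp; rewrite /be => hbp.
lra.
Qed.
Lemma inf_le (T : Type) (psi : T -> R) y :
  (ereal_inf (range (fun y => (psi y)%:E)) <= (psi y)%:E)%E.
Proof. by apply: ereal_inf_lbound; exists y. Qed.

Lemma inf_ge (T : Type) (psi : T -> R) c :
  (forall y, c <= psi y) -> (c%:E <= ereal_inf (range (fun y => (psi y)%:E)))%E.
Proof. by move=> h; apply: le_ereal_inf_tmp => _ [y _ <-]; rewrite lee_fin. Qed.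

Lemma thr_rpos n (f : 'rV[R]_n -> \bar R) r : (prox_threshold f < r%:E)%E -> 0 < r.
Proof. by move/thr_lb => [r' [c [xb [/andP[h1 h2] _]]]]; apply: lt_trans h2. Qed.

Lemma me_fin n (f : 'rV[R]_n -> \bar R) r : proper_fun f -> (prox_threshold f < r%:E)%E ->
  forall x, moreau_env f r x \is a fin_num.
Proof.
move=> [hn [z0 hz0]] /thr_lb [r' [c [xb [hr hf]]]] x.
apply: fin_real; apply/andP; split.
- apply: lt_le_trans (ltNyr (c - r' * r / (r - r') / 2 * sqnorm (xb - x))) _.
  by apply: le_ereal_inf_tmp => _ [y _ <-]; exact: me_lb.
- apply: le_lt_trans (me_le f r x z0) _.
  case: (ereal_cases (hn z0)) hz0 => [->|[t ->]]; first by rewrite ltxx.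
  by move=> _; rewrite -EFinD ltry.
Qed.

Lemma Eub n (f : 'rV[R]_n -> \bar R) r x z F : moreau_env f r x \is a fin_num -> f z = F%:E ->
  fine (moreau_env f r x) <= F + r / 2 * sqnorm (z - x).
Proof.
move=> hfin hz; have := me_le f r x z; rewrite hz -(fineK hfin) -EFinD lee_fin.
by rewrite fineK.
Qed.

Lemma I1 n m (l : 'rV[R]_m) (z : 'I_m -> 'rV[R]_n) (y : 'rV[R]_n) :
  \sum_(i < m) l 0 i = 1 ->
  \sum_(i < m) l 0 i * sqnorm (z i - y) =
  sqnorm (y - \sum_(i < m) l 0 i *: z i) + \sum_(i < m) l 0 i * sqnorm (z i)
  - sqnorm (\sum_(i < m) l 0 i *: z i).
Proof.
move=> hl.
rewrite /sqnorm.
under eq_bigr => i _ do rewrite mulr_sumr.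
under [X in _ = _ + X - _]eq_bigr => i _ do rewrite mulr_sumr.
rewrite exchange_big /= [X in _ = _ + X - _]exchange_big /= -big_split /= -sumrB.
apply: eq_bigr => j _.
rewrite !mxE !summxE.
have hA : \sum_(k < m) (l 0 k *: z k) 0 j = \sum_(k < m) l 0 k * z k 0 j.
  by apply: eq_bigr => k _; rewrite mxE.
rewrite hA.
set A := \sum_(i < m) l 0 i * z i 0 j.
have -> : \sum_(i < m) l 0 i * (z i - y) 0 j ^+ 2 =
  \sum_(i < m) l 0 i * z i 0 j ^+ 2 - 2 * y 0 j * A + y 0 j ^+ 2 * \sum_(i < m) l 0 i.
  rewrite /A !mulr_sumr -sumrB -big_split /=; apply: eq_bigr => i _; rewrite !mxE; ring.
rewrite hl; ring.
Qed.
Lemma PA_repr n m (f : 'I_m -> 'rV[R]_n -> \bar R) delta r l x :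
  (forall i y, moreau_env (f i) r y \is a fin_num) ->
  PA f delta r l x = (- ereal_inf (range (fun y => (- \sum_(i < m) l 0 i * fine (moreau_env (f i) r y) + (r + delta l) / 2 * sqnorm (y - x))%:E)))%E.
Proof.
move=> hfin; rewrite /PA /moreau_env; congr (- ereal_inf _)%E; apply: eq_imagel => y _ /=.
have -> : (\sum_(i < m) (l 0 i)%:E * moreau_env (f i) r y)%E = (\sum_(i < m) l 0 i * fine (moreau_env (f i) r y))%:E.
  by rewrite -sumEFin; apply: eq_bigr => i _; rewrite EFinM fineK.
by rewrite EFinD EFinN.
Qed.

Lemma Qid n (t : R) (y x1 x2 : 'rV[R]_n) :
  sqnorm (y - (t *: x1 + (1 - t) *: x2)) - sqnorm (t *: x1 + (1 - t) *: x2) =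
  t * (sqnorm (y - x1) - sqnorm x1) + (1 - t) * (sqnorm (y - x2) - sqnorm x2).
Proof.
rewrite /sqnorm -!sumrB !mulr_sumr -big_split /=; apply: eq_bigr => i _; rewrite !mxE; ring.
Qed.

Lemma unit_sum m (i : 'I_m) (E : 'I_m -> R) : \sum_(j < m) (@unitv R m i) 0 j * E j = E i.
Proof.
rewrite (bigD1 i) //= big1 ?addr0 => [|j hj].
  by rewrite /unitv mxE !eqxx /= mul1r.
by rewrite /unitv mxE /= (negbTE hj) mul0r.
Qed.
End S.
Unset Implicit Arguments.

Theorem mainTheorem1 (R : realType) (n m : nat) (hm : (0 < m)%N)
  (f : 'I_m -> 'rV[R]_n -> \bar R)
  (hproper : forall i, proper_fun (f i))
  (hlsc : forall i, lower_semicontinuous (f i))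
  (hpb : forall i, prox_bounded (f i))
  (r : R) (hr : forall i, (prox_threshold (f i) < r%:E)%E)
  (delta : 'rV[R]_m -> R)
  (hdcont : {within @simplex R m, continuous delta})
  (hde : forall i, delta (@unitv R m i) = 0)
  (hdpos : forall l, @simplex R m l -> (forall i, l <> @unitv R m i) -> 0 < delta l) :
  (forall l, @simplex R m l -> proper_fun (PA f delta r l)) /\
  (forall l, @simplex R m l -> (forall i, l 0 i != 1) ->
     lower_C2 (PA f delta r l)) /\
  (forall i, convex_efun (fun x => (f i x + (r / 2 * sqnorm x)%:E)%E) ->
     PA f delta r (@unitv R m i) = f i).
Proof.
have r0 : 0 < r := thr_rpos (hr (Ordinal hm)).
have hfin : forall i y, moreau_env (f i) r y \is a fin_num := fun i => me_fin (hproper i) (hr i).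
have [zf hzf] : {zf : 'I_m -> 'rV[R]_n & forall i, exists F, f i (zf i) = F%:E}.
  apply: (@choice _ _ (fun i z => exists F, f i z = F%:E)) => i.
  have [hn [z hz]] := hproper i; exists z.
  by case: (ereal_cases (hn z)) hz => [->|[t ->]]; [rewrite ltxx | exists t].
have [Ff hFf] : {Ff : 'I_m -> R & forall i, f i (zf i) = (Ff i)%:E}.
  exact: (@choice _ _ (fun i F => f i (zf i) = F%:E)).
have hEub : forall i y, fine (moreau_env (f i) r y) <= Ff i + r / 2 * sqnorm (zf i - y).
  by move=> i y; exact: Eub (hfin i y) (hFf i).
have hPhi : forall l, simplex l -> forall y,
    \sum_(i < m) l 0 i * fine (moreau_env (f i) r y) <=
    \sum_(i < m) l 0 i * Ff i + r / 2 * (sqnorm (y - \sum_(i < m) l 0 i *: zf i)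
      + \sum_(i < m) l 0 i * sqnorm (zf i) - sqnorm (\sum_(i < m) l 0 i *: zf i)).
  move=> l [hl0 hl1] y; rewrite -I1 // mulr_sumr -big_split /=.
  apply: ler_sum => i _; have := hEub i y; have := hl0 i; nra.
have hdelta : forall l, simplex l -> 0 <= delta l.
  move=> l hl; case: (pselect (exists i, l = unitv R i)) => [[i ->]|hne]; first by rewrite hde.
  by apply: ltW; apply: hdpos => // i hi; apply: hne; exists i.
have hlow : forall l x, (-oo < PA f delta r l x)%E.
  move=> l x; rewrite (PA_repr _ _ _ hfin).
  move: (inf_le (fun y => - \sum_(i < m) l 0 i * fine (moreau_env (f i) r y) + (r + delta l) / 2 * sqnorm (y - x)) x).
  by case: (ereal_inf _) => [t _| |_] //=; rewrite ltNyr.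
split.
  move=> l hl; split; first exact: hlow.
  set w := \sum_(i < m) l 0 i *: zf i.
  exists w.
  set C := \sum_(i < m) l 0 i * Ff i + r / 2 * (\sum_(i < m) l 0 i * sqnorm (zf i) - sqnorm w).
  apply: (@le_lt_trans _ _ C%:E); last exact: ltry.
  rewrite (PA_repr _ _ _ hfin) leeNl -EFinN; apply: inf_ge => y.
  have := hPhi l hl y; have := hdelta l hl; have := sqnorm_ge0 (y - w).
  rewrite -/w /C; nra.
split.
  move=> l hl hne.
  have hd : 0 < delta l.
    apply: hdpos => // i hi; by have := hne i; rewrite hi /unitv mxE !eqxx /= => /negP; apply.
  set s := r + delta l.
  have rs : 0 < r < s by rewrite r0 /s ltrDl hd.
  set w := \sum_(i < m) l 0 i *: zf i.
  have hfinPA : forall x, PA f delta r l x \is a fin_num.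
    move=> x; apply: fin_real; rewrite hlow /=.
    set C := \sum_(i < m) l 0 i * Ff i + r / 2 * (\sum_(i < m) l 0 i * sqnorm (zf i) - sqnorm w)
      + (r * s / (s - r)) / 2 * sqnorm (w - x).
    apply: (@le_lt_trans _ _ C%:E); last exact: ltry.
    rewrite (PA_repr _ _ _ hfin) leeNl -EFinN; apply: inf_ge => y.
    have := hPhi l hl y; have := QLv y w x rs.
    rewrite -/w -/s /C; lra.
  split; first exact: hfinPA.
  move=> x; exists setT, s; split => //; first exact: openT.
  move=> x1 x2 t _ _ /andP[t0 t1].
  set psi := fun x y => - \sum_(i < m) l 0 i * fine (moreau_env (f i) r y) + s / 2 * sqnorm (y - x).
  have hinf : forall x, ereal_inf (range (fun y => (psi x y)%:E)) = (- fine (PA f delta r l x))%:E.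
    move=> z; have := PA_repr delta l z hfin.
    rewrite -(fineK (hfinPA z)) => hz.
    by rewrite EFinN hz oppeK.
  have hle : forall x y, - fine (PA f delta r l x) <= psi x y.
    by move=> z y; have := inf_le (psi z) y; rewrite hinf lee_fin.
  set xt := t *: x1 + (1 - t) *: x2.
  set c := s / 2 * sqnorm xt - (t * (fine (PA f delta r l x1) + s / 2 * sqnorm x1)
     + (1 - t) * (fine (PA f delta r l x2) + s / 2 * sqnorm x2)).
  have : (c%:E <= (- fine (PA f delta r l xt))%:E)%E.
    rewrite -hinf; apply: inf_ge => y.
    have h1 := hle x1 y; have h2 := hle x2 y.
    have h1' : t * (- fine (PA f delta r l x1)) <= t * psi x1 y by apply: ler_wpM2l => //; lra.
    have h2' : (1 - t) * (- fine (PA f delta r l x2)) <= (1 - t) * psi x2 y by apply: ler_wpM2l => //; lra.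
    have hq := Qid t y x1 x2.
    have hq' : s / 2 * (sqnorm (y - xt) - sqnorm xt) = s / 2 * (t * (sqnorm (y - x1) - sqnorm x1) + (1 - t) * (sqnorm (y - x2) - sqnorm x2)) by rewrite hq.
    move: h1' h2'; rewrite /psi /c; lra.
  rewrite lee_fin /c => hc; lra.
move=> i hconv; apply: funext => x.
rewrite (PA_repr _ _ _ hfin) hde addr0.
have -> : (fun y => (- \sum_(j < m) (@unitv R m i) 0 j * fine (moreau_env (f j) r y) + r / 2 * sqnorm (y - x))%:E)
  = (fun y => (- fine (moreau_env (f i) r y) + r / 2 * sqnorm (y - x))%:E).
  by apply: funext => y; rewrite (unit_sum i (fun j => fine (moreau_env (f j) r y))).
apply/le_anti/andP; split.
  case: (ereal_cases ((hproper i).1 x)) => [->|[F hF]]; first exact: leey.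
  rewrite hF leeNl -EFinN; apply: inf_ge => y.
  have := Eub (hfin i y) hF; rewrite sqnormB_sym; lra.
apply: le_by_reals => c hc.
have [r' [c0 [xb [hr' hf']]]] := thr_lb (hr i).
have hL : forall z, ((c0 - r' * r / (r - r') / 2 * sqnorm xb)%:E <= f i z + (r / 2 * sqnorm z)%:E)%E.
  by move=> z; have := me_lb hr' hf' 0 z; rewrite !subr0.
have hz0 : (f i (zf i) < +oo)%E by rewrite hFf ltry.
have [y hy] := core r0 (hlsc i) (hproper i).1 hconv hL hz0 hc.
have hme : ((c + r / 2 * sqnorm (y - x))%:E <= moreau_env (f i) r y)%E.
  by apply: le_ereal_inf_tmp => _ [z _ <-]; exact: hy.
rewrite -(fineK (hfin i y)) lee_fin in hme.
rewrite leeNr -EFinN; apply: le_trans (inf_le _ y) _; rewrite lee_fin; lra.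
Qed.
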